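(* If $\mu$ is a super-strict partition, then the generating function $\sum_{n\ge1}|\mathrm{Av}_n(\mu)|z^n$ is a rational function of $z$.
   Context: A partition is a weakly decreasing sequence of nonnegative integers with finitely many nonzero parts, identified with its Ferrers board. $\alpha$ contains $\mu$ if one can delete some rows and some columns of the Ferrers board of $\alpha$ so that after top/left-justifying the remaining boxes one obtains $\mu$; otherwise $\alpha$ avoids $\mu$. $\mathrm{Av}_n(\mu)$ is the set of partitions of weight $n$ avoiding $\mu$. A partition is super-strict if any two of its positive parts differ by at least $2$. *)

(* Defs.v *)
From HB Require Import structures.
From mathcomp Require Import all_boot all_order all_algebra.
From Stdlib Require Import ClassicalEpsilon.
Set Implicit Arguments. Unset Strict Implicit. Unset Printing Implicit Defensive.
Import GRing.Theory.

(* A partition is represented by the list of its positive parts, in weakly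
   decreasing order (trailing zeros omitted). *)
Definition is_partition (s : seq nat) : bool :=
  sorted geq s && all (fun x => 0 < x) s.

Definition super_strict (mu : seq nat) : Prop :=
  forall i j, i < j < size mu -> nth 0 mu j + 2 <= nth 0 mu i.

(* The Ferrers board of alpha is {(i,j) | j < alpha_i} (0-indexed).
   Keeping the rows r (a subsequence of alpha) and the set of columns C,
   row a keeps the boxes j in C with j < a; after left-justifying, its length
   is count (fun j => j < a) C; the kept row lengths are weakly decreasing, so
   top-justifying only removes the empty rows. *)
Definition contains (alpha mu : seq nat) : Prop :=
  exists (r C : seq nat), [/\ subseq r alpha, uniq C &
    [seq x <- [seq count (fun j => j < a) C | a <- r] | 0 < x] = mu].

Definition containsb (alpha mu : seq nat) : bool :=
  if excluded_middle_informative (contains alpha mu) then true else false.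

(* all sequences of length <= n with entries <= n (a superset of the
   partitions of n) *)
Definition cand (n : nat) : seq (seq nat) :=
  flatten [seq [seq map (@nat_of_ord n.+1) (tval t) | t <- enum {: k.-tuple 'I_n.+1}]
          | k <- iota 0 n.+1].

Definition Av_card (n : nat) (mu : seq nat) : nat :=
  count (fun p => [&& is_partition p, sumn p == n & ~~ containsb p mu])
        (undup (cand n)).

(* f : nat -> rat, viewed as the formal power series sum_n f n z^n, is rational:
   Q * F = P as formal power series with Q(0) <> 0, i.e. F = P/Q. *)
Definition rational_series (f : nat -> rat) : Prop :=
  exists P Q : {poly rat}, (Q`_0 != 0)%R /\
    forall n, (\sum_(i < n.+1) Q`_i * f (n - i)%N = P`_n)%R.

Definition Av_gf_coef (mu : seq nat) (n : nat) : rat :=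
  if n == 0%N then 0%R else ((Av_card n mu)%:R)%R.

(* Main.v *)
Require Import Defs.
From mathcomp Require Import all_boot all_order all_algebra.
From Stdlib Require Import ClassicalEpsilon.
From mathcomp Require Import zify.
Set Implicit Arguments. Unset Strict Implicit. Unset Printing Implicit Defensive.
Import GRing.Theory.

Section Rat.
Local Open Scope ring_scope.

Definition tr (f : nat -> rat) (N : nat) : {poly rat} := \poly_(i < N) f i.
Definition eqm (N : nat) (p q : {poly rat}) := forall n, (n < N)%N -> p`_n = q`_n.

Lemma eqm_mul N p p' q q' : eqm N p p' -> eqm N q q' -> eqm N (p * q) (p' * q').
Proof.
move=> hp hq n hn; rewrite !coefM; apply: eq_bigr => i _.
have hi : (i <= n)%N by rewrite -ltnS.
rewrite hp ?hq //; [exact: leq_ltn_trans (leq_subr _ _) hn | exact: leq_ltn_trans hi hn].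
Qed.

Lemma eqm_add N p p' q q' : eqm N p p' -> eqm N q q' -> eqm N (p + q) (p' + q').
Proof. by move=> hp hq n hn; rewrite !coefD hp ?hq. Qed.

Lemma eqm_refl N p : eqm N p p. Proof. by []. Qed.
Lemma eqm_trans N p q r : eqm N p q -> eqm N q r -> eqm N p r.
Proof. by move=> h1 h2 n hn; rewrite h1 ?h2. Qed.

Lemma rat_alt f : rational_series f <->
  exists P Q : {poly rat}, Q`_0 != 0 /\ forall N, eqm N (Q * tr f N) P.
Proof.
split=> -[P [Q [hQ h]]]; exists P, Q; split=> //.
  move=> N n hn; rewrite coefM -h; apply: eq_bigr => i _.
  rewrite coef_poly (leq_ltn_trans (leq_subr _ _) hn) //.
move=> n; have := h n.+1 n (ltnSn n); rewrite coefM => <-; apply: eq_bigr => i _.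
by rewrite coef_poly ltnS leq_subr.
Qed.

Lemma rat_add f g : rational_series f -> rational_series g ->
  rational_series (fun n => f n + g n).
Proof.
move=> /rat_alt [P1 [Q1 [h1 e1]]] /rat_alt [P2 [Q2 [h2 e2]]]; apply/rat_alt.
exists (Q2 * P1 + Q1 * P2), (Q1 * Q2); split.
  by rewrite coef0M mulf_neq0.
move=> N.
have -> : tr (fun n => f n + g n) N = tr f N + tr g N.
  by apply/polyP => i; rewrite coefD !coef_poly; case: ifP; rewrite ?addr0.
rewrite mulrDr.
have -> : Q1 * Q2 * tr f N = Q2 * (Q1 * tr f N) by rewrite mulrA (mulrC Q2).
have -> : Q1 * Q2 * tr g N = Q1 * (Q2 * tr g N) by rewrite mulrA.
by apply: eqm_add; apply: eqm_mul.
Qed.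

Lemma rat_scale c f : rational_series f -> rational_series (fun n => c * f n).
Proof.
move=> /rat_alt [P1 [Q1 [h1 e1]]]; apply/rat_alt.
exists (c%:P * P1), Q1; split=> // N.
have -> : tr (fun n => c * f n) N = c%:P * tr f N.
  by apply/polyP => i; rewrite coefCM !coef_poly; case: ifP; rewrite ?mulr0.
rewrite mulrA (mulrC Q1) -mulrA; apply: eqm_mul => //.
Qed.

Lemma rat_fin f N0 : (forall n, (N0 <= n)%N -> f n = 0) -> rational_series f.
Proof.
move=> hf; apply/rat_alt; exists (tr f N0), 1; split; first by rewrite coef1.
move=> N n hn; rewrite mul1r !coef_poly hn; case: ltnP => // /hf; done.
Qed.

Lemma rat_rec (a r : nat -> rat) (e : nat) : (0 < e)%N -> rational_series r ->
  (forall n, a n = (if (e <= n)%N then a (n - e)%N else 0) + r n) ->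
  rational_series a.
Proof.
move=> he /rat_alt [P [Q [hQ hr]]] ha; apply/rat_alt.
exists P, ((1 - 'X^e) * Q); split.
  by rewrite coef0M coefB coef1 coefXn; case: (e) he => // e' _; rewrite subr0 mul1r.
move=> N.
have h1 : eqm N ((1 - 'X^e) * tr a N) (tr r N).
  move=> n hn; rewrite mulrBl mul1r coefB coefXnM !coef_poly hn ha.
  case: ltnP => hen; first by rewrite subr0 add0r.
  rewrite (leq_ltn_trans (leq_subr _ _) hn).
  by rewrite addrC addKr.
rewrite -mulrA (mulrC Q) mulrA; apply: eqm_trans (hr N).
rewrite (mulrC _ Q); apply: eqm_mul => //.
Qed.

Lemma rat_sum (K : nat) (f : nat -> nat -> rat) :
  (forall j, (j < K)%N -> rational_series (f j)) ->
  rational_series (fun n => \sum_(j < K) f j n).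
Proof.
elim: K => [|K IH] h.
  apply: (@rat_fin _ 0) => n _; by rewrite big_ord0.
have := rat_add (IH (fun j hj => h j (ltnW hj))) (h K (ltnSn K)).
move=> /rat_alt [P [Q [hQ hr]]]; apply/rat_alt; exists P, Q; split=> // N.
suff -> : tr (fun n => \sum_(j < K.+1) f j n) N = tr (fun n => \sum_(j < K) f j n + f K n) N by [].
by apply/polyP => i; rewrite !coef_poly big_ord_recr.
Qed.

End Rat.

Lemma rat_ext (f g : nat -> rat) : (forall n, f n = g n) -> rational_series f -> rational_series g.
Proof. by move=> h [P [Q [hQ hr]]]; exists P, Q; split=> // n; rewrite -hr; apply: eq_bigr => i _; rewrite h. Qed.


Definition pb (P : Prop) : bool := if excluded_middle_informative P then true else false.
Lemma pbP P : reflect P (pb P).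
Proof. by rewrite /pb; case: excluded_middle_informative => h; constructor. Qed.

Definition parts n := [seq p <- undup (cand n) | is_partition p && (sumn p == n)].

Lemma part_pos p x : is_partition p -> x \in p -> 0 < x.
Proof. by case/andP => _ /allP h /h. Qed.

Lemma geq_trans : transitive geq.
Proof. by move=> y x z h1 h2; exact: leq_trans h2 h1. Qed.
Lemma geq_total : total geq.
Proof. by move=> x y; exact: leq_total. Qed.
Lemma geq_anti : antisymmetric geq.
Proof. by move=> x y h; apply/eqP; rewrite eqn_leq andbC. Qed.

Lemma part_head p x : is_partition p -> x \in p -> x <= head 0 p.
Proof.
case: p => // a s /andP [hs _]; rewrite inE => /orP [/eqP -> //|hx].
by have /allP := order_path_min geq_trans hs; move/(_ x hx).
Qed.

Lemma mem_sumn p x : x \in p -> x <= sumn p.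
Proof.
elim: p => // a s IH; rewrite inE /= => /orP [/eqP ->|/IH h]; first exact: leq_addr.
exact: leq_trans h (leq_addl _ _).
Qed.

Lemma part_size p : is_partition p -> size p <= sumn p.
Proof.
elim: p => // a s IH /andP [hs /= /andP [ha hall]] /=.
rewrite -add1n leq_add //; apply: IH; rewrite /is_partition hall andbT.
exact: path_sorted hs.
Qed.

Lemma mem_cand n p : is_partition p -> sumn p = n -> p \in cand n.
Proof.
move=> hp hs; apply/flattenP.
have hsz : size p <= n by rewrite -hs part_size.
exists [seq map (@nat_of_ord n.+1) (tval t) | t <- enum {: (size p).-tuple 'I_n.+1}].
  by apply/mapP; exists (size p) => //; rewrite mem_iota add0n ltnS.
have hsz2 : size (map (fun x => @inord n x) p) == size p by rewrite size_map.
apply/mapP; exists (Tuple hsz2); first by rewrite mem_enum.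
rewrite /= -map_comp map_id_in // => x hx /=; rewrite inordK // ltnS -hs.
exact: mem_sumn.
Qed.

Lemma parts_uniq n : uniq (parts n).
Proof. exact/filter_uniq/undup_uniq. Qed.

Lemma mem_parts n p : (p \in parts n) = is_partition p && (sumn p == n).
Proof.
rewrite mem_filter mem_undup; case h: (is_partition p && (sumn p == n)) => //=.
by case/andP: h => h1 /eqP h2; rewrite mem_cand.
Qed.

Definition cnt (P : seq nat -> Prop) n := count (fun p => pb (P p)) (parts n).

Lemma cnt_ext (P Q : seq nat -> Prop) n :
  (forall p, is_partition p -> sumn p = n -> (P p <-> Q p)) -> cnt P n = cnt Q n.
Proof.
move=> h; apply: eq_in_count => p; rewrite mem_parts => /andP [h1 /eqP h2].
by apply/pbP/pbP; apply h.
Qed.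

Lemma cnt_split (P R : seq nat -> Prop) n :
  cnt P n = cnt (fun p => P p /\ R p) n + cnt (fun p => P p /\ ~ R p) n.
Proof.
rewrite /cnt -count_predUI; rewrite [X in _ + X](_ : _ = 0).
  rewrite addn0; apply: eq_count => p /=.
  by apply/pbP/orP => [h|[/pbP [] | /pbP []] //]; case: (pbP (R p)) => hr;
     [left | right]; apply/pbP.
apply/eqP; rewrite -leqn0 leqNgt -has_count; apply/hasP => -[p _ /andP [/pbP [] _ h1 /pbP [] _ h2]].
by [].
Qed.

Lemma cnt_sub (P Q : seq nat -> Prop) n :
  (forall p, P p -> Q p) ->
  cnt Q n = cnt P n + cnt (fun p => Q p /\ ~ P p) n.
Proof.
move=> h; rewrite (cnt_split Q P); congr (_ + _); apply: cnt_ext => p _ _.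
by split=> [[]|] //; split=> //; apply: h.
Qed.

Lemma cnt_bij (P Q : seq nat -> Prop) n m (f : seq nat -> seq nat) :
  (forall p, is_partition p -> sumn p = n -> P p ->
     [/\ is_partition (f p), sumn (f p) = m & Q (f p)]) ->
  (forall p1 p2, is_partition p1 -> sumn p1 = n -> P p1 ->
     is_partition p2 -> sumn p2 = n -> P p2 -> f p1 = f p2 -> p1 = p2) ->
  (forall q, is_partition q -> sumn q = m -> Q q ->
     exists p, [/\ is_partition p, sumn p = n, P p & f p = q]) ->
  cnt P n = cnt Q m.
Proof.
move=> hf hinj hsurj; rewrite /cnt -!size_filter.
set s := filter _ _; set t := filter _ _.
have hs x : x \in s -> [/\ is_partition x, sumn x = n & P x].
  by rewrite mem_filter mem_parts => /andP [/pbP h /andP [h1 /eqP h2]].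
have hu : uniq (map f s).
  rewrite map_inj_in_uniq; first exact/filter_uniq/parts_uniq.
  by move=> x y /hs [hx1 hx2 hx3] /hs [hy1 hy2 hy3]; apply: hinj.
rewrite -(size_map f); apply: perm_size; apply: uniq_perm => //.
  exact/filter_uniq/parts_uniq.
move=> q; apply/mapP/idP.
  move=> [p /hs [h1 h2 h3] ->]; have [q1 q2 q3] := hf p h1 h2 h3.
  by rewrite mem_filter mem_parts q1 q2 eqxx; apply/andP; split=> //; apply/pbP.
rewrite mem_filter mem_parts => /andP [/pbP hq /andP [h1 /eqP h2]].
have [p [p1 p2 p3 <-]] := hsurj q h1 h2 hq; exists p => //.
by rewrite mem_filter mem_parts p1 p2 eqxx; apply/andP; split=> //; apply/pbP.
Qed.

Lemma cnt_sum K (P : nat -> seq nat -> Prop) n :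
  (forall p i j, i < K -> j < K -> P i p -> P j p -> i = j) ->
  cnt (fun p => exists2 j, j < K & P j p) n = \sum_(j < K) cnt (P j) n.
Proof.
move=> hu; rewrite /cnt; elim: (parts n) => [|x s IH] /=.
  by rewrite big1.
rewrite big_split /= IH; congr (_ + _).
case: (pbP (exists2 j, j < K & P j x)) => [[j hj hp]|hn].
  rewrite (bigD1 (Ordinal hj)) //= big1 ?addn0; first by case: pbP.
  move=> i hi; case: pbP => // hpi; exfalso; move: hi; rewrite -val_eqE /=.
  by rewrite (hu x i j) ?eqxx.
rewrite big1 // => i _; case: pbP => // hpi; exfalso; apply: hn; by exists i.
Qed.


Fixpoint Low (T : nat) (ws : seq nat) (U : nat) (S : nat -> Prop) : Prop :=
  match ws with
  | [::] => U = T
  | w :: ws' => exists b, [/\ S b, T <= b, (forall x, S x -> T <= x -> b <= x)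
                                & Low (b + w) ws' U S]
  end.

Definition InC T ws e S := exists U, Low T ws U S /\ forall x, S x -> x < U + e.

Definition Top U d (S : nat -> Prop) := exists b, [/\ S b, U <= b,
  (forall x, S x -> U <= x -> b <= x) & forall x, S x -> x < b + d].

Lemma Low_ge T ws U S : Low T ws U S -> T <= U.
Proof.
elim: ws T => [|w ws IH] T /=; first by move->.
case=> b [_ hb _ /IH h]; exact: leq_trans hb (leq_trans (leq_addr _ _) h).
Qed.

Lemma Low_uniq T ws U1 U2 S : Low T ws U1 S -> Low T ws U2 S -> U1 = U2.
Proof.
elim: ws T => [|w ws IH] T /=; first by move=> -> ->.
case=> b1 [s1 t1 m1 l1] [b2 [s2 t2 m2 l2]].
have eb : b1 = b2 by apply/eqP; rewrite eqn_leq m1 // m2.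
by subst b2; apply: IH l1 l2.
Qed.

Lemma Low_loc T ws U S S' : all (fun w => 0 < w) ws -> Low T ws U S ->
  (forall x, x < U -> (S x <-> S' x)) -> Low T ws U S'.
Proof.
elim: ws T => [|w ws IH] T //= /andP [hw hws] [b [s1 t1 m1 l1]] hS.
have hbU : b < U.
  have := Low_ge l1; lia.
exists b; split=> //; first by apply/hS.
  move=> x hx hTx; case: (ltnP x U) => hxU; first by apply: m1 => //; apply/hS.
  exact: leq_trans (ltnW hbU) hxU.
by apply: IH.
Qed.

Lemma InC_split T pre d e S :
  InC T (pre ++ [:: d]) e S <-> exists U, Low T pre U S /\ Top U (d + e) S.
Proof.
elim: pre T => [|w pre IH] T /=.
  split.
    case=> U' [[b [s1 t1 m1 ->]] h]; exists T; split=> //; exists b; split=> //.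
    by move=> x /h; rewrite addnA.
  case=> U [-> [b [s1 t1 m1 h]]]; exists (b + d); split.
    by exists b.
  by move=> x /h; rewrite addnA.
split.
  case=> U' [[b [s1 t1 m1 l1]] h].
  have [U [l2 tp]] : exists U, Low (b + w) pre U S /\ Top U (d + e) S.
    by apply/IH; exists U'.
  by exists U; split=> //; exists b.
case=> U [[b [s1 t1 m1 l1]] tp].
have [U' [l2 h]] : InC (b + w) (pre ++ [:: d]) e S by apply/IH; exists U.
by exists U'; split=> //; exists b.
Qed.

Lemma InC_top T pre d e S :
  InC T (pre ++ [:: d]) e S <-> InC T (pre ++ [:: d + e]) 0 S.
Proof.
rewrite !InC_split addn0; done.
Qed.

Lemma InC_mono T ws e S : InC T ws 0 S -> InC T ws e S.
Proof.
by case=> U [l h]; exists U; split=> // x /h; rewrite addn0 => /leq_trans; apply; apply: leq_addr.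
Qed.

Lemma exmin (p : seq nat) U : (exists x, x \in p /\ U <= x) ->
  exists b, [/\ b \in p, U <= b & forall x, x \in p -> U <= x -> b <= x].
Proof.
move=> h.
have h' : exists n, (fun x => (x \in p) && (U <= x)) n.
  by case: h => x [h1 h2]; exists x; rewrite h1 h2.
case: (ex_minnP h') => b /andP [hb1 hb2] hm; exists b; split=> // x h1 h2.
by apply: hm; rewrite h1 h2.
Qed.


Definition Sp (p : seq nat) : nat -> Prop := fun x => x \in p.

Lemma cnt_false (P : seq nat -> Prop) n :
  (forall p, is_partition p -> sumn p = n -> ~ P p) -> cnt P n = 0.
Proof.
move=> h; apply/eqP; rewrite -leqn0 leqNgt -has_count; apply/hasP => -[p].
by rewrite mem_parts => /andP [h1 /eqP h2] /pbP; apply: h.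
Qed.

Lemma head_max p M : is_partition p -> M \in p -> (forall x, x \in p -> x <= M) ->
  head 0 p = M.
Proof.
move=> hp hM hall; apply/eqP; rewrite eqn_leq part_head // andbT.
by case: p hp hM hall => // a s _ _ h; apply: h; rewrite mem_head.
Qed.

Lemma sort_part s : all (fun x => 0 < x) s -> is_partition (sort geq s).
Proof.
move=> h; rewrite /is_partition sort_sorted ?geq_total //=.
by apply/allP => x; rewrite mem_sort => /(allP h).
Qed.

Section Rot.
Variables (T : nat) (pre : seq nat) (e : nat).
Hypotheses (hT : 0 < T) (hpre : all (fun w => 0 < w) pre) (he : 0 < e).

Definition Cls p := InC T (pre ++ [:: e.+1]) 0 (Sp p).
Definition Dom p := Cls p /\ exists U, Low T pre U (Sp p) /\ U + e <= head 0 p.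
Definition rot p := sort geq (head 0 p - e :: behead p).

Lemma cls_info p : Cls p -> exists U b, [/\ Low T pre U (Sp p), b \in p, U <= b,
  (forall x, x \in p -> U <= x -> b <= x) & (forall x, x \in p -> x < b + e.+1)].
Proof.
move=> /InC_split [U [l [b [s1 s2 s3 s4]]]]; exists U, b; split=> //.
by move=> x /s4; rewrite addn0.
Qed.

Lemma cls_mk p U b : Low T pre U (Sp p) -> b \in p -> U <= b ->
  (forall x, x \in p -> U <= x -> b <= x) -> (forall x, x \in p -> x < b + e.+1) -> Cls p.
Proof.
move=> l s1 s2 s3 s4; apply/InC_split; exists U; split=> //; exists b; split=> //.
by move=> x /s4; rewrite addn0.
Qed.

Lemma rot_fwd p : is_partition p -> Dom p ->
  [/\ is_partition (rot p), sumn (rot p) = sumn p - e, e <= head 0 p &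
   exists U, [/\ Low T pre U (Sp (rot p)), head 0 p - e \in rot p, U <= head 0 p - e,
     (forall x, x \in rot p -> U <= x -> head 0 p - e <= x) & Cls (rot p)]].
Proof.
move=> hp [hc [U' [l' hU']]].
have [U [b [l s1 s2 s3 s4]]] := cls_info hc.
have eU : U' = U by apply: Low_uniq l' l.
subst U'.
case: p hp hc l l' s1 s3 s4 hU' => [|L s] hp hc l l' s1 s3 s4 /= hU'.
  by move: hU'; rewrite leqn0 addn_eq0 => /andP [_ /eqP h]; move: he; rewrite h.
have hmax x : x \in L :: s -> x <= L by move=> hx; exact: (part_head hp hx).
have hLb : L < b + e.+1 by apply: s4; rewrite mem_head.
have hmem x : (x \in rot (L :: s)) = (x == L - e) || (x \in s).
  by rewrite /rot mem_sort inE.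
have hs x : x \in s -> x \in L :: s by move=> h; rewrite inE h orbT.
have hpos : all (fun x => 0 < x) (L - e :: s).
  have hTU := Low_ge l.
  rewrite /=; apply/andP; split; first lia.
  by case/andP: hp => _ /= /andP [].
have hmin x : x \in rot (L :: s) -> U <= x -> L - e <= x.
  rewrite hmem => /orP [/eqP -> //|/hs hx hUx]; have := s3 x hx hUx; lia.
have hl2 : Low T pre U (Sp (rot (L :: s))).
  apply: (Low_loc hpre l) => x hx; rewrite /Sp hmem inE.
  have -> : (x == L - e) = false by apply/negbTE; lia.
  have -> : (x == L) = false by apply/negbTE; lia.
  done.
split=> //.
- exact: sort_part.
- by rewrite /rot (perm_sumn (permEl (perm_sort _ _))) /=; lia.
- lia.
exists U; split=> //.
- by rewrite hmem eqxx.
- lia.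
apply: (cls_mk hl2 (b := L - e)) => //.
- by rewrite hmem eqxx.
- lia.
move=> x; rewrite hmem => /orP [/eqP ->|/hs /hmax]; lia.
Qed.

Lemma rot_inj p1 p2 : is_partition p1 -> Dom p1 -> is_partition p2 -> Dom p2 ->
  rot p1 = rot p2 -> p1 = p2.
Proof.
move=> hp1 hd1 hp2 hd2 he12.
have [_ _ hL1 [U1 [l1 m1 u1 n1 _]]] := rot_fwd hp1 hd1.
have [_ _ hL2 [U2 [l2 m2 u2 n2 _]]] := rot_fwd hp2 hd2.
rewrite he12 in l1 m1 n1.
have eU : U1 = U2 by apply: Low_uniq l1 l2.
subst U2.
have eL : head 0 p1 = head 0 p2.
  have h1 := n1 _ m2 u2; have h2 := n2 _ m1 u1; lia.
case: p1 p2 hp1 hp2 hd1 hd2 he12 eL {hL1 hL2 l1 m1 u1 n1 l2 m2 u2 n2}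
  => [|a1 s1] [|a2 s2] hp1 hp2 [_ [U [_ h1]]] [_ [U' [_ h2]]];
  rewrite /= in h1 h2; try (exfalso; lia).
move=> he12 /= ea; subst a2; congr (_ :: _).
move: he12; rewrite /rot /= => /(perm_sortP geq_total geq_trans geq_anti).
rewrite perm_cons => hperm.
apply: (sorted_eq geq_trans geq_anti) hperm.
  exact: path_sorted (andP hp1).1.
exact: path_sorted (andP hp2).1.
Qed.

Lemma rot_surj q : is_partition q -> Cls q ->
  exists p, [/\ is_partition p, sumn p = sumn q + e, Dom p & rot p = q].
Proof.
move=> hq hc.
have [U [b [l s1 s2 s3 s4]]] := cls_info hc.
have hqb x : x \in q -> x <= b + e.
  move=> hx; case: (leqP U x) => hUx; first by have := s4 x hx; lia.
  lia.
set p := sort geq (b + e :: rem b q).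
have hpmem x : (x \in p) = (x == b + e) || (x \in rem b q).
  by rewrite mem_sort inE.
have hremq x : x \in rem b q -> x \in q by apply: mem_rem.
have hp : is_partition p.
  apply: sort_part => /=; rewrite addn_gt0 he orbT /=.
  by apply/allP => x /hremq hx; exact: part_pos hq hx.
have hbe : b + e \in p by rewrite hpmem eqxx.
have hpmax x : x \in p -> x <= b + e.
  by rewrite hpmem => /orP [/eqP ->//|/hremq /hqb].
have hhead : head 0 p = b + e by apply: head_max.
have hpne : p = (b + e) :: behead p.
  by case: (p) hbe hhead => //= a s _ ->.
have hperm : perm_eq (behead p) (rem b q).
  rewrite -(perm_cons (b + e)) -hpne; exact: (permEl (perm_sort _ _)).
have hl2 : Low T pre U (Sp p).
  apply: (Low_loc hpre l) => x hx; rewrite /Sp hpmem.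
  have -> : (x == b + e) = false by apply/negbTE; lia.
  rewrite /=; split; last by apply: hremq.
  by move=> hxq; apply: rem_mem => //; apply/eqP; lia.
exists p; split=> //.
- rewrite (perm_sumn (permEl (perm_sort _ _))) /= (perm_sumn (perm_to_rem s1)) /=; lia.
- split.
    have [b'' [t1 t2 t3]] := exmin (U := U) (p := p) (ex_intro _ (b + e) (conj hbe (leq_trans s2 (leq_addr _ _)))).
    have hbb : b <= b''.
      move: t1; rewrite hpmem => /orP [/eqP ->|/hremq hx]; first exact: leq_addr.
      exact: s3.
    apply: (cls_mk hl2 t1) => // x /hpmax; lia.
  exists U; split=> //; rewrite hhead; lia.
rewrite /rot hhead addnK.
rewrite -(sorted_sort geq_trans (andP hq).1).
apply/(perm_sortP geq_total geq_trans geq_anti).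
apply: (perm_trans (y := b :: rem b q)); first by rewrite perm_cons.
by rewrite perm_sym; apply: perm_to_rem.
Qed.

End Rot.


Lemma part_cons a s : is_partition (a :: s) = [&& path geq a s, 0 < a & is_partition s].
Proof.
rewrite /is_partition /=; case h: (path geq a s) => //=.
by rewrite (path_sorted h) andbA.
Qed.

Definition G M n := cnt (fun p => forall x, x \in p -> x < M) n.

Lemma G_small M n : M <= 1 -> G M n = (n == 0).
Proof.
move=> hM; rewrite /G (@cnt_ext _ (fun p => p = [::])).
  rewrite /cnt (eq_count (a2 := pred1 [::])); last by move=> p; apply/pbP/eqP.
  by rewrite count_uniq_mem ?parts_uniq // mem_parts /= eq_sym.
move=> p hp _; split=> [h|-> //].
case: p hp h => // a s hp h; have := part_pos hp (mem_head a s); have := h a (mem_head a s).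
lia.
Qed.

Lemma G_rec M n : 0 < M -> G M.+1 n = (if M <= n then G M.+1 (n - M) else 0) + G M n.
Proof.
move=> hM; rewrite /G (cnt_split _ (fun p => M \in p)); congr (_ + _); last first.
  apply: cnt_ext => p _ _; split.
    case=> h1 h2 x hx; have := h1 x hx; case: (ltngtP x M) => //; last by move=> e; move: hx; rewrite e => /h2.
    by move=> ha hb; lia.
  by move=> h; split=> [x /h|/h]; lia.
case: leqP => hn; last first.
  apply: cnt_false => p hp hs [_ /mem_sumn]; lia.
apply: (cnt_bij (f := behead)).
- move=> [|a s] hp hs [h1 h2] //; rewrite part_cons in hp.
  case/and3P: hp => hpa ha hs'.
  have ea : a = M.
    apply: (head_max (p := a :: s)); [by rewrite part_cons hpa ha hs' | by [] | by move=> x /h1; rewrite ltnS].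
  subst a; split=> //=; first by move: hs => /=; lia.
  by move=> x hx; apply: h1; rewrite inE hx orbT.
- move=> [|a1 s1] [|a2 s2] hp1 hs1 [h1 h1'] hp2 hs2 [h2 h2'] //= es; subst s2.
  have e1 : a1 = M.
    apply: (head_max (p := a1 :: s1)) => //; by move=> x /h1; rewrite ltnS.
  have e2 : a2 = M.
    apply: (head_max (p := a2 :: s1)) => //; by move=> x /h2; rewrite ltnS.
  by rewrite e1 e2.
- move=> q hq hs h; exists (M :: q); split=> //=.
  + rewrite part_cons hq hM; case: q hq hs h => [|a s] hq _ h; rewrite ?andbT //=.
    rewrite -ltnS h ?mem_head //=; by case/andP: hq.
  + lia.
  + split; last by rewrite mem_head.
    by move=> x; rewrite inE => /orP [/eqP ->|/h].
Qed.

Lemma ratG M : rational_series (fun n => (G M n)%:R%R).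
Proof.
elim: M => [|M IH].
  apply: (@rat_fin _ 1) => n hn; rewrite G_small //; case: n hn => //.
case: (posnP M) => hM.
  subst M; apply: (@rat_fin _ 1) => n hn; rewrite G_small //; case: n hn => //.
apply: (rat_rec hM IH) => n; rewrite G_rec // natrD; case: leqP => //.
Qed.

Section Rec.
Variables (T : nat) (pre : seq nat) (e : nat).
Hypotheses (hT : 0 < T) (hpre : all (fun w => 0 < w) pre) (he : 0 < e).

Lemma rem_char p : is_partition p ->
  ((Cls T pre e p /\ ~ (exists U, Low T pre U (Sp p) /\ U + e <= head 0 p)) <->
   (InC T pre e (Sp p) /\ ~ InC T pre 0 (Sp p))).
Proof.
move=> hp; split.
  case=> hc hn; have [U [b [l s1 s2 s3 s4]]] := cls_info hc.
  have hh : head 0 p < U + e by rewrite ltnNge; apply/negP => h; apply: hn; exists U.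
  split.
    exists U; split=> // x hx; exact: leq_ltn_trans (part_head hp hx) hh.
  case=> U' [l' h']; have eU := Low_uniq l l'; subst U'.
  by have := h' b s1; lia.
case=> [[U [l hlt]] hn].
case: (boolP (has (fun x => U <= x) p)) => hh; last first.
  exfalso; apply: hn; exists U; split=> // x hx; rewrite addn0.
  by move/hasPn: hh => /(_ x hx); rewrite -ltnNge.
have [b [t1 t2 t3]] : exists b, [/\ b \in p, U <= b & forall x, x \in p -> U <= x -> b <= x].
  by apply: exmin; case/hasP: hh => x h1 h2; exists x.
split.
  apply: (cls_mk l t1) => // x /hlt; lia.
case=> U' [l' h']; have eU := Low_uniq l l'; subst U'.
case: p hp hlt hh t1 t3 l l' h' {hn} => // a s hp hlt _ _ _ _ _ /= h'.
by have := hlt a (mem_head a s); lia.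
Qed.

Lemma F_rec n :
  cnt (Cls T pre e) n = (if e <= n then cnt (Cls T pre e) (n - e) else 0) +
    (cnt (fun p => InC T pre e (Sp p)) n - cnt (fun p => InC T pre 0 (Sp p)) n).
Proof.
rewrite (cnt_split _ (fun p => exists U, Low T pre U (Sp p) /\ U + e <= head 0 p)).
congr (_ + _).
  case: leqP => hn; last first.
    apply: cnt_false => p hp hs hd; have [_ _ hL _] := rot_fwd hT hpre he hp hd.
    case: p hp hs hd hL => [|a s] _ /= hs _ hL; lia.
  apply: (cnt_bij (f := rot e)).
  - move=> p hp hs hd; have [h1 h2 _ [U [_ _ _ _ h3]]] := rot_fwd hT hpre he hp hd.
    by rewrite h2 hs.
  - move=> p1 p2 hp1 _ hd1 hp2 _ hd2; exact: (rot_inj hT hpre he hp1 hd1 hp2 hd2).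
  - move=> q hq hs hc; have [p [h1 h2 h3 h4]] := rot_surj hT hpre he hq hc.
    by exists p; split=> //; rewrite h2 hs subnK.
rewrite (@cnt_sub (fun p => InC T pre 0 (Sp p)) (fun p => InC T pre e (Sp p)) n).
  rewrite addKn; apply: cnt_ext => p hp _; exact: rem_char.
move=> p; exact: InC_mono.
Qed.

End Rec.

Lemma ratF k : forall T ws e, 0 < T -> size ws = k -> all (fun w => 1 < w) ws ->
  rational_series (fun n => (cnt (fun p => InC T ws e (Sp p)) n)%:R%R).
Proof.
elim: k => [|k IH] T ws e hT.
  case: ws => // _ _.
  apply: (rat_ext _ (ratG (T + e))) => n; congr (_%:R%R); apply: cnt_ext => p _ _; split.
    by move=> h; exists T.
  by case=> U [/= -> h].
case/lastP: ws => // pre d; rewrite size_rcons => [[hs]].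
rewrite all_rcons => /andP [hd hpre].
have hpre' : all (fun w => 0 < w) pre by apply: sub_all hpre => w; lia.
set E := (d + e).-1.
have hE : 0 < E by rewrite /E; lia.
have eE : d + e = E.+1 by rewrite /E; lia.
apply: (@rat_ext (fun n => (cnt (Cls T pre E) n)%:R%R)).
  move=> n; congr (_%:R%R); apply: cnt_ext => p _ _.
  by rewrite -cats1 (InC_top T pre d e) eE /Cls.
apply: (rat_rec hE (rat_add (IH T pre E hT hs hpre) (rat_scale (-1) (IH T pre 0 hT hs hpre)))).
move=> n; rewrite (F_rec hT hpre' hE) natrD.
rewrite natrB; last first.
  rewrite (@cnt_sub (fun p => InC T pre 0 (Sp p)) (fun p => InC T pre E (Sp p)) n) ?leq_addr //.
  move=> p; exact: InC_mono.
case: leqP => _; by rewrite mulN1r.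
Qed.


Fixpoint ChainFrom (T : nat) (gs : seq nat) (S : nat -> Prop) : Prop :=
  match gs with
  | [::] => True
  | g :: gs' => exists u, [/\ S u, T <= u & ChainFrom (u + g) gs' S]
  end.

Fixpoint gapsOf (s : seq nat) : seq nat :=
  match s with
  | [::] => [::]
  | x :: s' => match s' with [::] => [:: 0] | y :: _ => (y - x) :: gapsOf s' end
  end.

Lemma size_gapsOf s : size (gapsOf s) = size s.
Proof. by elim: s => //= x [|y s] IH //=; rewrite IH. Qed.

Lemma chain_mono T T' gs S : T' <= T -> ChainFrom T gs S -> ChainFrom T' gs S.
Proof.
case: gs => //= g gs h [u [s1 s2 s3]]; exists u; split=> //; exact: leq_trans h s2.
Qed.

Lemma greedy gs : forall T p, ~ ChainFrom T gs (Sp p) <->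
  exists2 j, j < size gs & InC T (take j gs) 0 (Sp p).
Proof.
elim: gs => [|g gs IH] T p /=.
  by split=> [h|[j]] //; exfalso; apply: h.
split.
  move=> h; case: (boolP (has (fun x => T <= x) p)) => hh; last first.
    exists 0 => //; exists T; split=> // x hx; rewrite addn0.
    by move/hasPn: hh => /(_ x hx); rewrite -ltnNge.
  have [b [t1 t2 t3]] : exists b, [/\ b \in p, T <= b & forall x, x \in p -> T <= x -> b <= x].
    by apply: exmin; case/hasP: hh => x h1 h2; exists x.
  have hn : ~ ChainFrom (b + g) gs (Sp p) by move=> hc; apply: h; exists b.
  have [j hj [U [l hU]]] := (IH (b + g) p).1 hn.
  exists j.+1 => //; exists U; split=> //; by exists b.
case=> -[|j] hj [U [l hU]] [u [s1 s2 s3]].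
  by move: l => /= el; subst U; have := hU u s1; lia.
case: l => b [t1 t2 t3 l].
have : ~ ChainFrom (b + g) gs (Sp p).
  apply/(IH (b + g) p); exists j => //; by exists U.
apply; apply: chain_mono s3; rewrite leq_add2r; exact: t3.
Qed.

Lemma InC_prefix ws : forall T g ws' S, InC T ws 0 S -> InC T (ws ++ g :: ws') 0 S -> False.
Proof.
elim: ws => [|w ws IH] T g ws' S /=.
  case=> U [-> h] [U' [[b [s1 s2 _ _]] _]]; have := h b s1; lia.
case=> U [[b [s1 s2 s3 l]] h] [U' [[b' [s1' s2' s3' l']] h']].
have eb : b = b' by apply/eqP; rewrite eqn_leq s3 // s3'.
subst b'; apply: (IH (b + w) g ws' S); by [exists U | exists U'].
Qed.

Lemma InC_take_uniq gs T S i j : i < size gs -> j < size gs ->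
  InC T (take i gs) 0 S -> InC T (take j gs) 0 S -> i = j.
Proof.
wlog hij : i j / i <= j.
  move=> hw hi hj h1 h2; case: (leqP i j) => h; first exact: hw.
  by symmetry; apply: hw => //; exact: ltnW.
move=> hi hj h1 h2; have [hlt|hlt|->//] := ltngtP i j; last by lia.
exfalso.
have e : take j gs = take i gs ++ take (j - i) (drop i gs) by rewrite -takeD subnKC.
case ed: (drop i gs) => [|g ws].
  by have := size_drop i gs; rewrite ed /=; lia.
move: h2; rewrite e ed.
case ej: (j - i) => [|k]; first lia.
by rewrite /=; apply: InC_prefix h1.
Qed.

Definition cntC (C : seq nat) a := count (fun j => j < a) C.

Lemma cntC_mono C b a : b <= a -> cntC C b <= cntC C a.
Proof. by move=> h; apply: sub_count => j /= hj; exact: leq_trans hj h. Qed.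

Lemma cntC_lip C b a : uniq C -> b <= a -> cntC C a <= cntC C b + (a - b).
Proof.
move=> hu hba.
have -> : cntC C a = cntC C b + count (fun j => (b <= j) && (j < a)) C.
  rewrite /cntC; elim: (C) => //= c s ->.
  case: (ltnP c b) => h1; case: (ltnP c a) => h2 /=; lia.
rewrite leq_add2l -size_filter -(size_iota b (a - b)).
apply: uniq_leq_size; first exact: filter_uniq.
move=> x; rewrite mem_filter mem_iota => /andP [/andP [h1 h2] _]; apply/andP; split=> //.
lia.
Qed.

Lemma wit (alpha C : seq nat) : uniq C -> forall nu x T, sorted ltn (x :: nu) ->
  (forall m, m \in x :: nu -> exists a, a \in alpha /\ cntC C a = m) ->
  (forall a, cntC C a = x -> T <= a) ->
  ChainFrom T (gapsOf (x :: nu)) (Sp alpha).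
Proof.
move=> hu; elim=> [|y nu IH] x T hs hw hT.
  have [a [h1 h2]] := hw x (mem_head _ _); exists a; split=> //; exact: hT.
have [a [h1 h2]] := hw x (mem_head _ _).
exists a; split=> //; first exact: hT.
case/andP: hs => hxy hs.
apply: IH => //.
  by move=> m hm; apply: hw; rewrite inE hm orbT.
move=> a' ha'.
have hlt : a < a'.
  rewrite ltnNge; apply/negP => h; have := cntC_mono C h; lia.
have := cntC_lip hu (ltnW hlt); lia.
Qed.

Fixpoint tg (n g : nat) (gs : seq nat) : seq nat :=
  match gs with [::] => [::] | g' :: gs' => (n + g) :: tg (n + g) g' gs' end.

Lemma tg_gaps nu : forall x, sorted leq (x :: nu) ->
  match gapsOf (x :: nu) with g :: gs => tg x g gs = nu | [::] => False end.
Proof.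
elim: nu => [|y nu IH] x; first by [].
move=> /andP [hxy hs]; have := IH y hs.
have -> : gapsOf [:: x, y & nu] = (y - x) :: gapsOf (y :: nu) by [].
case: (gapsOf (y :: nu)) => // g gs /= e; by rewrite subnKC // e.
Qed.

Lemma ext (alpha : seq nat) gs : forall u g n D, ChainFrom (u + g) gs (Sp alpha) ->
  uniq D -> all (fun c => c < u) D -> size D = n ->
  exists D' us, [/\ uniq D', (forall a, a <= u -> cntC D' a = cntC D a),
    all (fun x => x \in alpha) us & map (cntC D') us = tg n g gs].
Proof.
elim: gs => [|g' gs IH] u g n D /=.
  by move=> _ hu _ _; exists D, [::].
case=> u' [s1 s2 s3] hu hall hsz.
set D1 := D ++ iota (u' - g) g.
have hu1 : uniq D1.
  rewrite cat_uniq hu iota_uniq andbT /=; apply/hasPn => c; rewrite mem_iota => hc.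
  apply/negP => /(allP hall) /=; lia.
have hall1 : all (fun c => c < u') D1.
  rewrite all_cat; apply/andP; split.
    by apply: sub_all hall => c /=; lia.
  by apply/allP => c; rewrite mem_iota /=; lia.
have hsz1 : size D1 = n + g by rewrite size_cat size_iota hsz.
have [D' [us [h1 h2 h3 h4]]] := IH u' g' (n + g) D1 s3 hu1 hall1 hsz1.
exists D', (u' :: us); split=> //.
- move=> a ha; rewrite h2; last lia.
  rewrite /cntC count_cat (@eq_in_count _ _ pred0 (iota _ _)) ?count_pred0 ?addn0 //.
  by move=> c; rewrite mem_iota /=; lia.
- by rewrite /= s1.
rewrite /= h4 h2 // /cntC.
rewrite (@eq_in_count _ _ predT D1) ?count_predT ?hsz1 //.
by move=> c /(allP hall1).
Qed.

Lemma subseq_sorted alpha : forall r, sorted geq alpha -> sorted (fun x y => y < x) r ->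
  all (fun x => x \in alpha) r -> subseq r alpha.
Proof.
elim: alpha => [|y a IH] [|x r] //= hsa hsr hall.
  all: try (by case/andP: hall).
have hsa' : sorted geq a by exact: path_sorted hsa.
have hmax z : z \in a -> z <= y.
  by move=> hz; have /allP := order_path_min geq_trans hsa; move/(_ z hz).
case/andP: hall => hx hall.
have hrx : all (fun z => z < x) r.
  by apply: order_path_min hsr => u v w h1 h2; exact: ltn_trans h2 h1.
case: eqP => [exy|nxy].
  subst y; apply: IH => //; first exact: path_sorted hsr.
  apply/allP => z hz; have := allP hall z hz; rewrite inE => /orP [/eqP ezy|//].
  by have := allP hrx z hz; rewrite ezy ltnn.
have hxa : x \in a by move: hx; rewrite inE => /orP [/eqP //|//].
apply: IH => //=; rewrite hxa /=.
apply/allP => z hz; have := allP hall z hz; rewrite inE => /orP [/eqP ezy|//].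
have := allP hrx z hz; have := hmax x hxa; lia.
Qed.


Lemma ss_sorted mu : super_strict mu -> sorted (fun a b => a + 2 <= b) (rev mu).
Proof.
move=> hs; rewrite rev_sorted; apply/(sortedP 0) => i hi; apply: hs.
by rewrite leqnn hi.
Qed.

Lemma contains_chain alpha mu x nu : is_partition alpha -> is_partition mu ->
  super_strict mu -> rev mu = x :: nu ->
  (contains alpha mu <-> ChainFrom x (gapsOf (x :: nu)) (Sp alpha)).
Proof.
move=> ha hm hs enu.
have hsort : sorted (fun a b => a + 2 <= b) (x :: nu) by rewrite -enu; exact: ss_sorted.
have hlt : sorted ltn (x :: nu) by apply: sub_sorted hsort => a b /=; lia.
have hle : sorted leq (x :: nu) by apply: sub_sorted hsort => a b /=; lia.
have emu : mu = rev (x :: nu) by rewrite -enu revK.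
have hpos : all (fun m => 0 < m) mu by case/andP: hm.
split.
  case=> r [C [hsub hu heq]].
  apply: (wit (C := C)) => //.
    move=> m; rewrite -enu mem_rev -heq mem_filter => /andP [_ /mapP [a hra ->]].
    by exists a; split=> //; exact: (mem_subseq hsub hra).
  move=> a hca; have := cntC_lip hu (leq0n a).
  have h0 : cntC C 0 = 0 by rewrite /cntC (@eq_in_count _ _ pred0) ?count_pred0.
  rewrite h0 hca; lia.
have := tg_gaps hle; case: (gapsOf (x :: nu)) => // g gs etg.
case=> u1 [s1 s2 s3].
have hD1 : uniq (iota (u1 - x) x) by exact: iota_uniq.
have hD2 : all (fun c => c < u1) (iota (u1 - x) x).
  by apply/allP => c; rewrite mem_iota; lia.
have [D' [us [h1 h2 h3 h4]]] := ext s3 hD1 hD2 (size_iota _ _).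
have hmap : map (cntC D') (u1 :: us) = x :: nu.
  rewrite /= h4 etg h2 //; congr (_ :: _).
  by rewrite /cntC (@eq_in_count _ _ predT) ?count_predT ?size_iota // => c /(allP hD2).
exists (rev (u1 :: us)), D'; split=> //; last first.
  have -> : [seq count (fun j => j < a) D' | a <- rev (u1 :: us)] = mu.
    by rewrite map_rev -/(map (cntC D') (u1 :: us)) hmap emu.
  exact/all_filterP.
apply: subseq_sorted.
- by case/andP: ha.
- have : sorted (fun a b => b < a) (map (cntC D') (rev (u1 :: us))).
    rewrite map_rev hmap rev_sorted; apply: sub_sorted hlt => a b /=; lia.
  rewrite sorted_map; apply: sub_sorted => a b /= h.
  rewrite ltnNge; apply/negP => hab; have := cntC_mono D' hab; lia.
- by rewrite all_rev /= s1.
Qed.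

Lemma contains_nil alpha : contains alpha [::].
Proof. by exists [::], [::]; split; rewrite ?sub0seq. Qed.


Lemma Av_cnt n mu : Av_card n mu = cnt (fun p => ~ contains p mu) n.
Proof.
rewrite /Av_card /cnt /parts count_filter; apply: eq_count => p /=.
rewrite /containsb; case: excluded_middle_informative => h; case: pbP => h' //=;
  rewrite ?andbF ?andbT //.
Qed.

Lemma gaps_big nu : forall x j, sorted (fun a b => a + 2 <= b) (x :: nu) ->
  j < size (gapsOf (x :: nu)) -> all (fun w => 1 < w) (take j (gapsOf (x :: nu))).
Proof.
elim: nu => [|y nu IH] x j.
  by case: j.
move=> /andP [hxy hs].
have -> : gapsOf [:: x, y & nu] = (y - x) :: gapsOf (y :: nu) by [].
case: j => [|j] //= hj; apply/andP; split; first lia.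
exact: IH.
Qed.

Theorem mainTheorem8 (mu : seq nat) :
  is_partition mu -> super_strict mu -> rational_series (Av_gf_coef mu).
Proof.
move=> hp hss.
case emu: (rev mu) => [|x nu].
  have e0 : mu = [::] by rewrite -(revK mu) emu.
  subst mu; apply: (@rat_fin _ 0) => n _.
  rewrite /Av_gf_coef Av_cnt cnt_false; first by case: (n == 0).
  by move=> p _ _; apply; exact: contains_nil.
have hx : 0 < x.
  by case/andP: hp => _ /allP; apply; rewrite -mem_rev emu mem_head.
set gs := gapsOf (x :: nu).
have hsort : sorted (fun a b => a + 2 <= b) (x :: nu) by rewrite -emu; exact: ss_sorted.
set h := fun n => (\sum_(j < size gs) ((cnt (fun p => InC x (take j gs) 0 (Sp p)) n)%:R : rat))%R.
have hrat : rational_series h.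
  apply: (@rat_sum (size gs) (fun j n => (cnt (fun p => InC x (take j gs) 0 (Sp p)) n)%:R%R)) => j hj.
  by apply: (@ratF (size (take j gs))) => //; apply: gaps_big.
have hav n : Av_card n mu = \sum_(j < size gs) cnt (fun p => InC x (take j gs) 0 (Sp p)) n.
  rewrite Av_cnt -(@cnt_sum (size gs) (fun j p => InC x (take j gs) 0 (Sp p)) n); last first.
    move=> p i j hi hj; exact: InC_take_uniq.
  apply: cnt_ext => p hpp _.
  rewrite (contains_chain hpp hp hss emu); exact: greedy.
have hfin : rational_series (fun n => if n == 0 then - h 0 else 0)%R.
  by apply: (@rat_fin _ 1) => -[|n].
apply: (rat_ext _ (rat_add hrat hfin)) => n.
rewrite /Av_gf_coef; case: (n =P 0) => [->|_]; first by rewrite /= subrr.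
by rewrite addr0 hav natr_sum.
Qed.
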